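(* Let $N$ be a finite set and $h,s:2^N\to\mathbb{R}$. Define the convolution $(h*s)_A=\sum_{X\subseteq N}h_Xs_{A\setminus X}$ for $A\subseteq N$, the transform $\widehat{s}^{(1)}_B=\sum_{A\subseteq N,\,A\cap B=\emptyset}s_A$, and the transform $\widehat{s}^{(3)}_B=\sum_{A\subseteq B}(-1)^{|A|}s_A$ for $B\subseteq N$. Then for every $B\subseteq N$, $$\widehat{(h*s)}^{(3)}_B=\widehat{h}^{(1)}_B\,\widehat{s}^{(3)}_B.$$ *)

(* Defs.v *)
From mathcomp Require Import all_boot all_order all_algebra.
From mathcomp Require Import reals.
Set Implicit Arguments. Unset Strict Implicit. Unset Printing Implicit Defensive.
Import Order.TTheory GRing.Theory Num.Theory.
Local Open Scope ring_scope.

Definition conv (R : realType) (N : finType) (h s : {set N} -> R) (A : {set N}) : R :=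
  \sum_(X : {set N}) h X * s (A :\: X).

Definition hat1 (R : realType) (N : finType) (s : {set N} -> R) (B : {set N}) : R :=
  \sum_(A : {set N} | [disjoint A & B]) s A.

Definition hat3 (R : realType) (N : finType) (s : {set N} -> R) (B : {set N}) : R :=
  \sum_(A : {set N} | A \subset B) (-1) ^+ #|A| * s A.

(* Main.v *)
Require Import Defs.
From mathcomp Require Import all_boot all_order all_algebra.
From mathcomp Require Import reals.
From mathcomp Require Import lra.
Local Open Scope ring_scope.
Import GRing.Theory Num.Theory.

Section Aux.
Variables (R : realType) (N : finType).

Definition tog (z : N) (A : {set N}) : {set N} :=
  if z \in A then A :\ z else z |: A.

Lemma togK z : involutive (tog z).
Proof.
move=> A; rewrite {2}/tog; case: ifP => zA; rewrite /tog.
  by rewrite setD11 setD1K.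
by rewrite setU11 setU1K ?zA.
Qed.

Lemma sign_tog z (A : {set N}) :
  (-1) ^+ #|tog z A| = - ((-1) ^+ #|A|) :> R.
Proof.
rewrite /tog; case: ifP => zA.
  by rewrite [in RHS](cardsD1 z A) zA exprD expr1 mulN1r opprK.
by rewrite cardsU1 zA exprD expr1 mulN1r.
Qed.

Lemma inner (s : {set N} -> R) (B X : {set N}) :
  \sum_(A : {set N} | A \subset B) (-1) ^+ #|A| * s (A :\: X) =
  if [disjoint X & B] then hat3 s B else 0.
Proof.
case: ifP => dXB.
  apply: eq_bigr => A AB; congr (_ * s _).
  apply/setDidPl; apply: disjointWl AB _.
  by rewrite disjoint_sym.
have [z /setIP [zX zB]] : exists z, z \in X :&: B.
  apply/set0Pn; move: dXB; by rewrite -setI_eq0 => ->.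
set S := LHS.
have HS : S = - S.
  rewrite /S {1}(reindex_inj (can_inj (togK z))) /= -sumrN.
  apply: eq_big => A.
    rewrite /tog; case: ifP => zA.
      apply/idP/idP => H; first by rewrite -(setD1K zA) subUset sub1set zB H.
      by apply: subset_trans H; apply: subsetDl.
    by rewrite subUset sub1set zB.
  move=> _; rewrite sign_tog mulNr; congr (- (_ * s _)).
  rewrite /tog; apply/setP => y; case: ifP => _; rewrite !inE;
    by case: (y =P z) => // ->; rewrite zX.
lra.
Qed.
End Aux.

Theorem mainTheorem8 (R : realType) (N : finType) (h s : {set N} -> R) (B : {set N}) :
  hat3 (conv h s) B = hat1 h B * hat3 s B.
Proof.
rewrite /hat3 /conv.
under eq_bigr => A _ do rewrite mulr_sumr.
rewrite exchange_big /= /hat1 mulr_suml [RHS]big_mkcond /=.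
apply: eq_bigr => X _.
under eq_bigr => A _ do rewrite mulrCA.
rewrite -mulr_sumr (@inner R N s B X) -/(hat3 s B).
by case: ifP; rewrite ?mulr0.
Qed.
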